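(* Consider $N$ users indexed by $\mathcal{U}=\{1,\dots,N\}$ with fixed channel power gains $h_1,\dots,h_N>0$, noise variance $\eta>0$, target throughputs $\theta_1,\dots,\theta_N>0$, and strategy sets $\mathcal{P}^i=[0,P_i^{max}]$ with $P_i^{max}>0$. For $\mathbf{P}\in\prod_i\mathcal{P}^i$ let $r_i(\mathbf{P})=\log_2\!\big(1+\frac{h_iP_i}{\eta+\sum_{j\neq i}h_jP_j}\big)$. Let $\mathcal{S}$ be the set of satisfaction equilibria, i.e. profiles $\mathbf{P}\in\prod_i\mathcal{P}^i$ with $r_i(\mathbf{P})\ge\theta_i$ for all $i$, and suppose $\mathcal{S}\neq\emptyset$. Then the efficient satisfaction equilibrium (a minimizer of $\sum_{i}P_i$ over $\mathcal{S}$) is unique, and it is the solution of the system $r_i(\mathbf{P})=\theta_i$ for all $i\in\mathcal{U}$.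
   Context: The system $r_i(\mathbf{P})=\theta_i$, $i\in\mathcal{U}$, is equivalent to the linear system $h_iP_i-(2^{\theta_i}-1)\sum_{j\neq i}h_jP_j=(2^{\theta_i}-1)\eta$, $i\in\mathcal{U}$. *)

(* Defs.v *)
From mathcomp Require Import all_boot all_order all_algebra.
From mathcomp Require Import all_classical all_reals all_analysis.
Set Implicit Arguments. Unset Strict Implicit. Unset Printing Implicit Defensive.
Import Order.TTheory GRing.Theory Num.Theory.
Local Open Scope ring_scope.

Definition log2 {R : realType} (x : R) : R := ln x / ln 2.

Definition rate {R : realType} {N : nat} (h : 'I_N -> R) (eta : R)
  (P : 'I_N -> R) (i : 'I_N) : R :=
  log2 (1 + h i * P i / (eta + \sum_(j < N | j != i) h j * P j)).

Definition in_strategy_set {R : realType} {N : nat} (Pmax P : 'I_N -> R) : Prop :=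
  forall i, 0 <= P i <= Pmax i.

Definition satisfaction_eq {R : realType} {N : nat} (h : 'I_N -> R) (eta : R)
  (theta Pmax P : 'I_N -> R) : Prop :=
  in_strategy_set Pmax P /\ forall i, theta i <= rate h eta P i.

Definition efficient_SE {R : realType} {N : nat} (h : 'I_N -> R) (eta : R)
  (theta Pmax P : 'I_N -> R) : Prop :=
  satisfaction_eq h eta theta Pmax P /\
  forall Q, satisfaction_eq h eta theta Pmax Q ->
    \sum_(i < N) P i <= \sum_(i < N) Q i.

(* Main.v *)
Require Import Defs.
From mathcomp Require Import all_boot all_order all_algebra.
From mathcomp Require Import all_classical all_reals all_analysis.
From mathcomp Require Import ring lra.
Import Order.TTheory GRing.Theory Num.Theory.
Local Open Scope ring_scope.

Lemma key (R : realType) (t x D : R) : 0 < D -> 0 <= x ->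
  (t <= log2 (1 + x / D) <-> (expR (t * ln 2) - 1) * D <= x) /\
  (log2 (1 + x / D) = t <-> (expR (t * ln 2) - 1) * D = x).
Proof.
move=> D0 x0.
have l2 : 0 < ln (2:R) by apply: ln_gt0; lra.
have y0 : 0 < 1 + x / D by have := divr_ge0 x0 (ltW D0); lra.
rewrite /log2; split.
- rewrite ler_pdivlMr //.
  have -> : (t * ln 2 <= ln (1 + x / D)) = (expR (t * ln 2) <= 1 + x / D).
    by rewrite -ler_expR lnK ?posrE.
  rewrite -lerBlDl ler_pdivlMr //.
- split.
  + move=> H; have : ln (1 + x / D) = t * ln 2 by rewrite -H mulfVK ?gt_eqF.
    move=> /(congr1 expR); rewrite lnK ?posrE // => <-.
    by rewrite addrC addKr mulfVK ?gt_eqF.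
  + move=> H; rewrite -H mulfK ?gt_eqF // addrC subrK expRK mulfK ?gt_eqF //.
Qed.

Lemma rate_key (R : realType) (N : nat) (h : 'I_N -> R) (eta t : R) (P : 'I_N -> R)
  (i : 'I_N) : 0 < eta -> (forall j, 0 <= h j * P j) ->
  let e := expR (t * ln 2) in
  let S := eta + \sum_(j < N) h j * P j in
  (t <= rate h eta P i <-> (e - 1) / e * S <= h i * P i) /\
  (rate h eta P i = t <-> (e - 1) / e * S = h i * P i).
Proof.
move=> eta0 hP e S.
set D := eta + \sum_(j < N | j != i) h j * P j.
have D0 : 0 < D.
  rewrite /D; have : 0 <= \sum_(j < N | j != i) h j * P j by apply: sumr_ge0.
  lra.
have SD : S = D + h i * P i.
  rewrite /S /D (bigD1 i) //=; lra.
have e0 : 0 < e by apply: expR_gt0.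
have id : (e - 1) / e * S - h i * P i = ((e - 1) * D - h i * P i) / e.
  by rewrite SD; field; rewrite gt_eqF.
have [k1 k2] := @key R t _ _ D0 (hP i).
rewrite /rate -/D; split.
- rewrite k1 -[(e - 1) * D <= _]subr_le0 -[(e - 1) / e * S <= _]subr_le0 id.
  by rewrite pmulr_lle0 // invr_gt0.
- rewrite k2; split => H.
  + apply/eqP; rewrite -subr_eq0 id H subrr mul0r //.
  + move/eqP: H; rewrite -subr_eq0 id mulf_eq0 invr_eq0 (gt_eqF e0) orbF subr_eq0.
    by move/eqP.
Qed.

Theorem proposition2 (R : realType) (N : nat) (h : 'I_N -> R) (eta : R)
  (theta Pmax : 'I_N -> R)
  (hpos : forall i, 0 < h i) (etapos : 0 < eta)
  (thetapos : forall i, 0 < theta i) (Pmaxpos : forall i, 0 < Pmax i)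
  (Sne : exists P, satisfaction_eq h eta theta Pmax P) :
  exists Pstar : 'I_N -> R,
    efficient_SE h eta theta Pmax Pstar /\
    (forall Q, efficient_SE h eta theta Pmax Q -> Q = Pstar) /\
    (forall i, rate h eta Pstar i = theta i) /\
    (forall Q, in_strategy_set Pmax Q ->
       (forall i, rate h eta Q i = theta i) -> Q = Pstar).
Proof.
pose e i := expR (theta i * ln (2:R)).
pose a i := (e i - 1) / e i.
pose T (Q : 'I_N -> R) := \sum_(j < N) h j * Q j.
pose A := \sum_(i < N) a i.
have l2 : 0 < ln (2:R) by apply: ln_gt0; lra.
have e1 : forall i, 1 < e i by move=> i; rewrite /e expR_gt1 mulr_gt0.
have a0 : forall i, 0 < a i.
  by move=> i; rewrite /a divr_gt0 // ?subr_gt0 //; have := e1 i; lra.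
have A0 : 0 <= A by apply: sumr_ge0 => i _; exact: ltW.
have hQ0 : forall Q, in_strategy_set Pmax Q -> forall j, 0 <= h j * Q j.
  by move=> Q HQ j; have /andP[Q0 _] := HQ j; rewrite mulr_ge0 // ltW.
have T0 : forall Q, in_strategy_set Pmax Q -> 0 <= T Q.
  by move=> Q HQ; apply: sumr_ge0 => j _; exact: hQ0.
have RK := fun Q i (HQ : in_strategy_set Pmax Q) =>
  @rate_key R N h eta (theta i) Q i etapos (hQ0 Q HQ).
have feasE : forall Q, satisfaction_eq h eta theta Pmax Q ->
    forall i, a i * (eta + T Q) <= h i * Q i.
  by move=> Q [HQ Hr] i; case: (RK Q i HQ) => [[k _] _]; exact: k.
have sumfeas : forall Q, satisfaction_eq h eta theta Pmax Q ->
    A * (eta + T Q) <= T Q.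
  move=> Q HQ; rewrite /A mulr_suml; apply: ler_sum => i _; exact: feasE.
have A1 : A < 1.
  case: Sne => P0 HP0; have := sumfeas P0 HP0; have := T0 P0 HP0.1.
  move=> H2 H3; rewrite ltNge; apply/negP => H1; nra.
pose Ts := A * eta / (1 - A).
have Ts0 : 0 <= Ts by rewrite /Ts divr_ge0 ?mulr_ge0 ?subr_ge0 // ltW.
pose Ps i := a i * (eta + Ts) / h i.
have hPs : forall i, h i * Ps i = a i * (eta + Ts).
  by move=> i; rewrite /Ps; field; rewrite gt_eqF.
have TPs : T Ps = Ts.
  rewrite /T (eq_bigr _ (fun i _ => hPs i)) -mulr_suml -/A /Ts.
  by field; rewrite subr_eq0 gt_eqF.
have lowT : forall Q, satisfaction_eq h eta theta Pmax Q -> Ts <= T Q.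
  move=> Q HQ; have := sumfeas Q HQ; rewrite /Ts ler_pdivrMr ?subr_gt0 //.
  nra.
have low : forall Q, satisfaction_eq h eta theta Pmax Q -> forall i, Ps i <= Q i.
  move=> Q HQ i; rewrite -(ler_pM2l (hpos i)) hPs.
  apply: le_trans (feasE Q HQ i); rewrite ler_pM2l //; have := lowT Q HQ; lra.
case: Sne => P0 HP0.
have PsI : in_strategy_set Pmax Ps.
  move=> i; apply/andP; split.
    have : 0 <= eta + Ts by lra.
    move=> H; apply: divr_ge0; last exact: ltW.
    by apply: mulr_ge0 => //; apply: ltW.
  apply: le_trans (low P0 HP0 i) _; by case/andP: (HP0.1 i).
have PsR : forall i, rate h eta Ps i = theta i.
  move=> i; case: (RK Ps i PsI) => _ [_ k]; apply: k.
  by rewrite -/(T Ps) TPs hPs.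
have PsS : satisfaction_eq h eta theta Pmax Ps.
  by split=> // i; rewrite PsR.
exists Ps; split; first by split=> // Q HQ; apply: ler_sum => i _; exact: low.
split.
  move=> Q [HQ HQm]; apply/funext => i; apply/eqP; rewrite -subr_eq0; apply/eqP.
  apply: (@psumr_eq0P _ _ predT (fun i => Q i - Ps i)) => //.
    by move=> j _; rewrite subr_ge0 low.
  apply/le_anti/andP; split; last by apply: sumr_ge0 => j _; rewrite subr_ge0 low.
  by rewrite sumrB subr_le0 HQm.
split=> // Q HQ HQr.
have hQ : forall i, a i * (eta + T Q) = h i * Q i.
  by move=> i; case: (RK Q i HQ) => _ [k _]; exact: k.
have TQ : T Q = Ts.
  have : A * (eta + T Q) = T Q by rewrite /A mulr_suml; apply: eq_bigr => i _.
  rewrite /Ts => H; apply/eqP; rewrite eq_sym -subr_eq0.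
  have -> : A * eta / (1 - A) - T Q = (A * (eta + T Q) - T Q) / (1 - A).
    by field; rewrite subr_eq0 gt_eqF.
  by rewrite H subrr mul0r.
apply/funext => i; apply: (mulfI (negbT (gt_eqF (hpos i)))).
by rewrite -hQ hPs TQ.
Qed.
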